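(* For no traffic pattern in a multicast switch does the enhanced conflict graph contain an induced subgraph isomorphic to the Grötzsch graph.
   Context: A flow is $(i,J)$ with input $i$ and nonempty fanout set $J$ of outputs; a traffic pattern is a finite set of flows; subflows are $(i,J,j)$ with $j\in J$. Enhanced conflict graph: one vertex per subflow; distinct subflows $(i,J,j),(i',J',j')$ adjacent iff $j=j'$, or $i=i'$ and $J\ne J'$. The Grötzsch graph is the 11-vertex triangle-free graph with chromatic number 4 obtained by applying the Mycielski construction to the 5-cycle. *)

(* Defs.v *)
From mathcomp Require Import all_boot.
Set Implicit Arguments. Unset Strict Implicit. Unset Printing Implicit Defensive.

Definition flow (I O : finType) := (I * {set O})%type.
Definition subflow_t (I O : finType) := (I * {set O} * O)%type.

Definition traffic_pattern (I O : finType) (T : {set flow I O}) : Prop :=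
  forall f, f \in T -> f.2 != set0.

Definition is_subflow (I O : finType) (T : {set flow I O}) (s : subflow_t I O) : bool :=
  (s.1 \in T) && (s.2 \in s.1.2).

Definition ecg_adj (I O : finType) (s t : subflow_t I O) : bool :=
  (s != t) && ((s.2 == t.2) || ((s.1.1 == t.1.1) && (s.1.2 != t.1.2))).

(* Mycielski construction of a graph e on T: vertices are the originals
   (Some (inl x)), the shadows (Some (inr x)) and the hub (None). *)
Definition mycielski (T : finType) (e : rel T) : rel (option (T + T)) :=
  fun a b =>
    match a, b with
    | Some (inl x), Some (inl y) => e x y
    | Some (inl x), Some (inr y) => e x y
    | Some (inr x), Some (inl y) => e x y
    | Some (inr _), Some (inr _) => false
    | Some (inr _), None => true
    | None, Some (inr _) => true
    | _, _ => false
    end.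

Definition cycle5 : rel 'I_5 :=
  fun x y => (y == (x.+1 %% 5) :> nat) || (x == (y.+1 %% 5) :> nat).

Definition grotzsch_vertex := option ('I_5 + 'I_5).
Definition grotzsch : rel grotzsch_vertex := mycielski cycle5.

Definition ecg_has_induced_grotzsch (I O : finType) (T : {set flow I O}) : Prop :=
  exists phi : grotzsch_vertex -> subflow_t I O,
    injective phi /\
    (forall v, is_subflow T (phi v)) /\
    (forall u v, ecg_adj (phi u) (phi v) = grotzsch u v).

(* Main.v *)
Require Import Defs.
From mathcomp Require Import all_boot.
Set Implicit Arguments. Unset Strict Implicit.

Section L.
Variables I O : finType.
Implicit Types x a b c h : subflow_t I O.

Ltac crush := repeat (let H := fresh in move=> H);
  repeat match goal with
  | H : is_true (_ && _) |- _ => case/andP: H => ? ?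
  | H : is_true (_ || _) |- _ => case/orP: H => ?
  | H : is_true (~~ (_ && _)) |- _ => rewrite negb_and in H
  | H : is_true (~~ (_ || _)) |- _ => rewrite negb_or in H
  | H : is_true (~~ ~~ _) |- _ => rewrite negbK in H
  | H : is_true (_ == _) |- _ => move/eqP: H => H
  | H : is_true (_ != _) |- _ => move/eqP: H => H
  end; try congruence.

Lemma lemB x a b c : ecg_adj x a -> ecg_adj x b -> ~~ ecg_adj x c ->
  ~~ ecg_adj a b -> a != b -> a.1 = c.1 -> b.1 = c.1 -> False.
Proof.
case: x => [[xi xf] xo]; case: a => [[ai af] ao]; case: b => [[bi bf] bo];
case: c => [[ci cf] co]; rewrite /ecg_adj /= !xpair_eqE /=.
crush.
Qed.

Lemma lemF h a b : ecg_adj h a -> ecg_adj h b -> ~~ ecg_adj a b -> a != b ->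
  a.2 != h.2 -> b.2 != h.2 -> a.1 = b.1.
Proof.
case: h => [[xi xf] xo]; case: a => [[ai af] ao]; case: b => [[bi bf] bo];
rewrite /ecg_adj /= !xpair_eqE /=.
crush.
Qed.

Lemma lemP h a b : a.2 = h.2 -> b.2 = h.2 -> ~~ ecg_adj a b -> a != b -> False.
Proof.
case: h => [[xi xf] xo]; case: a => [[ai af] ao]; case: b => [[bi bf] bo];
rewrite /ecg_adj /= !xpair_eqE /=.
crush.
Qed.
End L.

Theorem corollary1 (I O : finType) (T : {set flow I O}) :
  traffic_pattern T -> ~ ecg_has_induced_grotzsch T.
Proof.
move=> _ [phi [inj [_ adj]]].
pose sh (k : nat) (H : k < 5) := phi (Some (inr (Ordinal H))).
pose og (k : nat) (H : k < 5) := phi (Some (inl (Ordinal H))).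
pose h := phi None.
have C : forall m a b c (Hm : m < 5) (Ha : a < 5) (Hb : b < 5) (Hc : c < 5),
   (sh a Ha).2 != h.2 -> (sh b Hb).2 != h.2 -> (sh c Hc).2 != h.2 ->
   grotzsch (Some (inl (Ordinal Hm))) (Some (inr (Ordinal Ha))) ->
   grotzsch (Some (inl (Ordinal Hm))) (Some (inr (Ordinal Hb))) ->
   ~~ grotzsch (Some (inl (Ordinal Hm))) (Some (inr (Ordinal Hc))) ->
   a != b -> b != c -> a != c -> False.
  move=> m a b c Hm Ha Hb Hc Pa Pb Pc G1 G2 G3 ab bc ac.
  have ne : forall u v : nat, forall (Hu : u < 5) (Hv : v < 5), u != v -> sh u Hu != sh v Hv.
    move=> u v Hu Hv uv; apply/eqP => /inj [] /eqP; by rewrite (negbTE uv).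
  have nadj : forall u v : nat, forall (Hu : u < 5) (Hv : v < 5), ~~ ecg_adj (sh u Hu) (sh v Hv).
    by move=> u v Hu Hv; rewrite /sh adj.
  have hadj : forall u (Hu : u < 5), ecg_adj h (sh u Hu) by move=> u Hu; rewrite /h /sh adj.
  apply: (@lemB _ _ (og m Hm) (sh a Ha) (sh b Hb) (sh c Hc)).
  - by rewrite /og /sh adj.
  - by rewrite /og /sh adj.
  - by rewrite /og /sh adj.
  - exact: nadj.
  - exact: ne.
  - apply: (@lemF _ _ h) => //; exact: ne.
  - apply: (@lemF _ _ h) => //; exact: ne.
have P : forall a b (Ha : a < 5) (Hb : b < 5), a != b ->
   (sh a Ha).2 == h.2 -> (sh b Hb).2 != h.2.
  move=> a b Ha Hb ab /eqP Pa; apply/eqP => Pb.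
  apply: (@lemP _ _ h _ _ Pa Pb); first by rewrite /sh adj.
  apply/eqP => /inj [] /eqP; by rewrite (negbTE ab).
case P1: ((sh 1 isT).2 == h.2).
  by apply: (C 4 3 0 2 isT isT isT isT (P 1 3 isT isT isT P1) (P 1 0 isT isT isT P1) (P 1 2 isT isT isT P1)).
case P3: ((sh 3 isT).2 == h.2).
  by apply: (C 0 4 1 2 isT isT isT isT (P 3 4 isT isT isT P3) (P 3 1 isT isT isT P3) (P 3 2 isT isT isT P3)).
case P4: ((sh 4 isT).2 == h.2).
  by apply: (C 2 1 3 0 isT isT isT isT (P 4 1 isT isT isT P4) (P 4 3 isT isT isT P4) (P 4 0 isT isT isT P4)).
by apply: (C 2 1 3 4 isT isT isT isT (negbT P1) (negbT P3) (negbT P4)).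
Qed.
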